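(* The values of $k(n)$ for $1\le n\le 9$ are: $k(1)=1$, $k(2)=k(3)=k(4)=2$, and $k(5)=k(6)=k(7)=k(8)=k(9)=3$.
   Context: The GKS game with parameter $n$ (a positive integer). A strategy pair $(S,T)$ consists of a function $S$ assigning a bit in $\{0,1\}$ to every sequence $\pi_1\pi_2\ldots\pi_i$ of distinct elements of $[n]=\{1,\dots,n\}$ with $1\le i\le n-1$, and a function $T:\{0,1\}^n\to 2^{[n]}$. For a permutation $\pi=\pi_1\ldots\pi_n$ of $[n]$ and a bit $b$, the final array $A_{\rm final}\in\{0,1\}^n$ is defined by $A_{\rm final}[\pi_i]=S(\pi_1\ldots\pi_i)$ for $1\le i\le n-1$ and $A_{\rm final}[\pi_n]=b$. The pair $(S,T)$ is a $(k,n)$ strategy if for every permutation $\pi$ of $[n]$ and every bit $b$ we have $\pi_n\in T(A_{\rm final})$, and moreover $|T(\sigma)|\le k$ for every $\sigma\in\{0,1\}^n$. $k(n)$ denotes the minimum $k$ such that a $(k,n)$ strategy exists. *)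

(* Defs.v *)
From mathcomp Require Import all_boot.
Unset Printing Implicit Defensive.

(* [n] = {1,...,n} is represented by 'I_n = {0,...,n-1}.
   A permutation pi = pi_1 ... pi_n of [n] is a sequence pi : seq 'I_n
   with perm_eq pi (enum 'I_n).
   S assigns a bit to every sequence of elements of [n]; only its values on
   sequences of distinct elements of length 1..n-1 are ever used. *)

Definition gks_S n := seq 'I_n -> bool.
Definition gks_T n := {ffun 'I_n -> bool} -> {set 'I_n}.

(* The final array: A[pi_i] = S(pi_1..pi_i) for i <= n-1, A[pi_n] = b.
   pi_i is the element at (0-based) position i-1, so for y = pi_i,
   index y pi = i-1. *)
Definition A_final (n : nat) (S : gks_S n) (pi : seq 'I_n) (b : bool)
  : {ffun 'I_n -> bool} :=
  [ffun y => if (index y pi).+1 == size pi then b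
             else S (take (index y pi).+1 pi)].

Definition is_strategy (k n : nat) (S : gks_S n) (T : gks_T n) : Prop :=
  (forall (pi : seq 'I_n) (b : bool), perm_eq pi (enum 'I_n) ->
     forall (p : seq 'I_n) (x : 'I_n), pi = rcons p x ->
       x \in T (@A_final n S pi b))
  /\ (forall sigma : {ffun 'I_n -> bool}, #|T sigma| <= k).

Definition strategy_exists (k n : nat) : Prop :=
  exists (S : gks_S n) (T : gks_T n), is_strategy k n S T.

Definition is_k_of (n k : nat) : Prop :=
  strategy_exists k n /\ (forall k', strategy_exists k' n -> k <= k').

(* Main.v *)
Require Import Defs.
From mathcomp Require Import all_boot.
From mathcomp Require Import zify.
Set Implicit Arguments.
Unset Strict Implicit.
Unset Printing Implicit Defensive.


Fixpoint orz (s t : seq bool) : seq bool :=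
  match s, t with
  | a :: s', b :: t' => (a || b) :: orz s' t'
  | [::], _ => t
  | _, [::] => s
  end.
Definition setU := orz.
Fixpoint zipT (s t : seq (seq bool)) : seq (seq bool) :=
  match s, t with
  | a :: s', b :: t' => setU a b :: zipT s' t'
  | [::], _ => t
  | _, [::] => s
  end.
Definition emptyS m : seq bool := nseq m false.
Definition ins {A} (i : nat) (b : A) (s : seq A) := take i s ++ b :: drop i s.
Definition del {A} (i : nat) (s : seq A) := take i s ++ drop i.+1 s.

Fixpoint pats (m : nat) : seq (seq bool) :=
  match m with
  | 0 => [:: [::]]
  | m'.+1 => [seq b :: w | b <- [:: false; true], w <- pats m']
  end.

Definition table := seq (seq bool).
Definition tablist m (F : seq bool -> seq bool) : table := [seq F w | w <- pats m].
Definition lookup m (t : table) (w : seq bool) := nth [::] t (index w (pats m)).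
Definition liftT m i (c : bool) (t : table) : table :=
  [seq (if nth false w i == c then ins i false (lookup m.-1 t (del i w)) else emptyS m)
  | w <- pats m].
Definition badT K (t : table) := has (fun s => K < count id s) t.
Definition opts m (Pp : seq table) : seq (seq table) :=
  [seq [seq liftT m i c t | c <- [:: false; true], t <- Pp] | i <- iota 0 m].

Fixpoint gen K (us : seq (seq table)) (cur : table) : seq table :=
  match us with
  | [::] => [:: cur]
  | o :: us' => flatten [seq (let nw := zipT cur t in
                              if badT K nw then [::] else gen K us' nw) | t <- o]
  end.

Definition base : seq table := [:: [:: [:: true]; [:: true]]].

Fixpoint P K m : seq table :=
  match m with
  | 0 => [::]
  | m'.+1 => if m' is 0 then base else
             undup (gen K (opts m (P K m')) (tablist m (fun _ => emptyS m)))
  end.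

Lemma count_orzl s t : count id s <= count id (orz s t).
Proof.
elim: s t => [|a s IH] [|b t] //=; rewrite leq_add //; by case: a; case: b.
Qed.
Lemma count_orzr s t : count id t <= count id (orz s t).
Proof.
elim: s t => [|a s IH] [|b t] //=; rewrite leq_add //; by case: a; case: b.
Qed.
Lemma nth_orz s t j : nth false (orz s t) j = nth false s j || nth false t j.
Proof.
elim: s t j => [|a s IH] [|b t] [|j] //=; by rewrite orbF.
Qed.
Lemma size_orz s t : size (orz s t) = maxn (size s) (size t).
Proof.
elim: s t => [|a s IH] [|b t] //=; by rewrite ?max0n ?maxn0 // IH maxnSS.
Qed.

Lemma badT_zipT K s t : badT K s -> badT K (zipT s t).
Proof.
elim: s t => [|a s IH] [|b t] //=.
case/orP=> [H|H]; apply/orP; [left|right; exact: IH].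
exact: leq_trans H (count_orzl _ _).
Qed.

Lemma badT_foldl K ts : forall cur, badT K cur -> badT K (foldl zipT cur ts).
Proof. elim: ts => [|t ts IH] cur //= H; apply: IH; exact: badT_zipT. Qed.

Lemma gen_complete K us : forall cur ts,
  all2 (fun t o => t \in o) ts us -> ~~ badT K (foldl zipT cur ts) ->
  foldl zipT cur ts \in gen K us cur.
Proof.
elim: us => [|o us IH] cur [|t ts] //=; first by rewrite inE.
case/andP=> Ht Hts Hnb.
apply/flatten_mapP; exists t => //.
case: ifP => Hb; first by move: Hnb; rewrite badT_foldl.
exact: IH.
Qed.

Lemma zipT_map {A} (F G : A -> seq bool) (s : seq A) :
  zipT (map F s) (map G s) = map (fun a => setU (F a) (G a)) s.
Proof. by elim: s => //= a s ->. Qed.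

Lemma foldl_tab {A} (s : seq A) (a : A -> seq bool) (F : nat -> A -> seq bool) l :
  map (fun w => foldl setU (a w) [seq F i w | i <- l]) s =
  foldl zipT (map a s) [seq map (F i) s | i <- l].
Proof.
elim: l a => [|i l IH] a //=.
by rewrite zipT_map -(IH (fun w => setU (a w) (F i w))).
Qed.

Lemma mem_pats m w : (w \in pats m) = (size w == m).
Proof.
elim: m w => [|m IH] [|b w] //=; rewrite cats0 mem_cat.
  by apply/negP; case/orP=> /mapP[].
have inj (c : bool) : injective (cons c) by move=> x y [].

have nf (c d : bool) s : c != d -> (c :: w \in [seq d :: x | x <- s]) = false.
  by move=> H; apply/negP => /mapP[x _ [E _]]; rewrite E eqxx in H.
rewrite eqSS -IH; case: b; rewrite (mem_map (inj _)) nf //; by rewrite orbF.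
Qed.

Lemma lookup_tab m F w : size w = m -> lookup m (tablist m F) w = F w.
Proof.
move=> Hw; rewrite /lookup /tablist (nth_map [::]) ?nth_index ?index_mem ?mem_pats ?Hw //.
Qed.

Lemma count_foldl_acc l : forall acc, count id acc <= count id (foldl setU acc l).
Proof. elim: l => //= t l IH acc; exact: leq_trans (count_orzl _ t) (IH _). Qed.

Lemma count_foldl l t : forall acc, t \in l -> count id t <= count id (foldl setU acc l).
Proof.
elim: l => //= t' l IH acc; rewrite inE; case/orP=> [/eqP ->|H]; last exact: IH.
exact: leq_trans (count_orzr _ _) (count_foldl_acc _ _).
Qed.

Lemma nth_foldl l j : forall acc, nth false (foldl setU acc l) j ->
  nth false acc j \/ has (fun t => nth false t j) l.
Proof.
elim: l => [|t l IH] acc /=; first by left.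
case/IH; last by move=> H; right; rewrite H orbT.
rewrite /setU nth_orz; case/orP; first by left.
by move=> H; right; rewrite H.
Qed.

Lemma size_foldl M l : forall acc, size acc = M -> all (fun t => size t == M) l ->
  size (foldl setU acc l) = M.
Proof.
elim: l => //= t l IH acc Ha /andP[/eqP Ht Hl]; apply: IH => //.
by rewrite /setU size_orz Ha Ht maxnn.
Qed.

Lemma count_ins i (b : bool) (s : seq bool) : count id (ins i b s) = b + count id s.
Proof.
rewrite /ins count_cat /= addnCA -count_cat cat_take_drop; by case: b.
Qed.

Lemma size_ins {A} i (b : A) s : size (ins i b s) = (size s).+1.
Proof. by rewrite /ins size_cat /= addnS -size_cat cat_take_drop. Qed.

Lemma size_del {A} i (s : seq A) : i < size s -> size (del i s) = (size s).-1.
Proof.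
move=> H; rewrite /del size_cat size_take size_drop H.
by case: (size s) H => // k; rewrite ltnS => ?; rewrite subSS addnBA // addKn.
Qed.

Lemma del_ins {A} i (b : A) s : i <= size s -> del i (ins i b s) = s.
Proof.
move=> H; rewrite /del /ins take_cat size_takel // ltnn subnn take0 cats0.
by rewrite drop_cat size_takel // ltnNge leqnSn /= subSn // subnn /= drop0 cat_take_drop.
Qed.

Lemma nth_ins {A} (x0 : A) i b s j : i <= size s ->
  nth x0 (ins i b s) j = if j < i then nth x0 s j else if j == i then b else nth x0 s j.-1.
Proof.
move=> H; rewrite /ins nth_cat size_takel //; case: ltnP => Hj.
  by rewrite nth_take.
case: ltngtP Hj => // Hj _; last by rewrite Hj subnn.
case: j Hj => // k; rewrite ltnS => Hk; by rewrite subSn //= nth_drop subnKC.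
Qed.

Lemma nth_del {A} (x0 : A) i s j : nth x0 (del i s) j = nth x0 s (j + (i <= j)).
Proof.
rewrite /del; case: (ltnP i (size s)) => Hs.
  rewrite nth_cat (size_takel (ltnW Hs)); case: ltnP => Hj.
    by rewrite nth_take // addn0.
  by rewrite nth_drop addn1 addSn subnKC.
rewrite take_oversize //.
rewrite drop_oversize; last exact: leq_trans Hs _.
rewrite cats0.
case: (leqP i j) => Hj; last by rewrite addn0.
rewrite addn1 !nth_default //; last exact: leq_trans Hs _.
apply: leq_trans Hs _; exact: ltnW.
Qed.



Definition remn n (g : seq 'I_n) : seq 'I_n := [seq x <- enum 'I_n | x \notin g].

Fixpoint prof n (S : gks_S n) (f : nat) (g : seq 'I_n) (w : seq bool) {struct f} : seq bool :=
  match f with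
  | 0 => [::]
  | f'.+1 =>
    match remn g with
    | [::] => [::]
    | u0 :: r' =>
      if size r' == 0 then [:: true] else
      foldl setU (emptyS (size r').+1)
        [seq (let u := nth u0 (u0 :: r') i in
              if nth false w i == S (rcons g u)
              then ins i false (prof S f' (rcons g u) (del i w))
              else emptyS (size r').+1) | i <- iota 0 (size r').+1]
    end
  end.

Lemma perm_g_rem n (g : seq 'I_n) : uniq g -> perm_eq (g ++ remn g) (enum 'I_n).
Proof.
move=> Ug; apply: uniq_perm.
- rewrite cat_uniq Ug filter_uniq ?enum_uniq //= andbT.
  by apply/hasP => -[x]; rewrite mem_filter => /andP[/negbTE ->].
- exact: enum_uniq.
move=> x; rewrite mem_cat mem_filter mem_enum andbT; by case: (x \in g).
Qed.

Lemma remn_rcons n (g : seq 'I_n) u0 i : uniq g -> i < size (remn g) ->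
  remn (rcons g (nth u0 (remn g) i)) = del i (remn g).
Proof.
move=> Ug Hi.
have Ur : uniq (remn g) by rewrite filter_uniq ?enum_uniq.
set u := nth u0 (remn g) i.
have -> : remn (rcons g u) = filter (predC1 u) (remn g).
  rewrite /remn -filter_predI; apply: eq_filter => x /=.
  by rewrite mem_rcons inE negb_or andbC.
rewrite /del -{1}(cat_take_drop i (remn g)) filter_cat.
rewrite (drop_nth u0 Hi) /= eqxx /=.
have Hu : u \notin take i (remn g).
  have := Ur; rewrite -{1}(cat_take_drop i (remn g)) (drop_nth u0 Hi) cat_uniq /=.
  by case/and3P=> _ /norP[].
have Hu2 : u \notin drop i.+1 (remn g).
  have := Ur; rewrite -{1}(cat_take_drop i (remn g)) (drop_nth u0 Hi) cat_uniq /=.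
  by case/and3P=> _ _ /andP[].
have F1 : filter (predC1 u) (take i (remn g)) = take i (remn g).
  apply/all_filterP/allP => x /= H; apply/eqP=> E; by rewrite -E H in Hu.
have F2 : filter (predC1 u) (drop i.+1 (remn g)) = drop i.+1 (remn g).
  apply/all_filterP/allP => x /= H; apply/eqP=> E; by rewrite -E H in Hu2.
by rewrite F1 F2.
Qed.

Lemma jj i j : j != i -> (j - (i < j)) + (i <= j - (i < j)) = j.
Proof.
case: (ltngtP j i) => // H _.
  by rewrite subn0 leqNgt H addn0.
have H2 : i <= j - 1 by lia.
by rewrite H2 /=; lia.
Qed.
Lemma jj_lt i j M : i < M.+1 -> j < M.+1 -> j != i -> j - (i < j) < M.
Proof.
move=> Hi Hj; case: (ltngtP j i) => // H _ /=; lia.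
Qed.

Lemma nth_ins' {A} (x0 : A) i b s j : i <= size s -> j != i ->
  nth x0 (ins i b s) j = nth x0 s (j - (i < j)).
Proof.
move=> H Hj; rewrite nth_ins //; case: (ltngtP j i) Hj => // Hji _.
  by rewrite subn0.
by rewrite subn1.
Qed.

Definition Fst n (S : gks_S n) (rec : seq 'I_n -> seq bool -> seq bool)
  (g : seq 'I_n) u0 r' i (w : seq bool) :=
  if nth false w i == S (rcons g (nth u0 (u0 :: r') i))
  then ins i false (rec (rcons g (nth u0 (u0 :: r') i)) (del i w))
  else emptyS (size r').+1.

Definition profstep n (S : gks_S n) (rec : seq 'I_n -> seq bool -> seq bool)
  (g : seq 'I_n) u0 r' (w : seq bool) :=
  foldl setU (emptyS (size r').+1) [seq Fst S rec g u0 r' i w | i <- iota 0 (size r').+1].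

Lemma profE n (S : gks_S n) f g w u0 r' : remn g = u0 :: r' ->
  prof S f.+1 g w = if size r' == 0 then [:: true] else profstep S (prof S f) g u0 r' w.
Proof. by move=> E; rewrite /= E. Qed.

Lemma size_prof n (S : gks_S n) f : forall g w, uniq g -> size (remn g) = f -> 0 < f ->
  size (prof S f g w) = f.
Proof.
elim: f => // f IH g w Ug.
case E: (remn g) => [|u0 r'] //; rewrite (profE _ _ _ E) => -[Hs] _.
case: eqP => H0; first by rewrite -Hs H0.
subst f; rewrite /profstep; apply: (size_foldl (M := (size r').+1)); first by rewrite size_nseq.
apply/allP => t /mapP[i]; rewrite mem_iota add0n => /andP[_ Hi] ->.
rewrite /Fst; case: ifP => _; last by rewrite size_nseq.
have Hi' : i < size (remn g) by rewrite E.
have := remn_rcons u0 Ug Hi'; rewrite E => Hr.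
rewrite size_ins IH //.
- rewrite rcons_uniq Ug andbT; have := mem_nth u0 Hi'.
  by rewrite [X in _ \in X]/remn mem_filter E => /andP[].
- by rewrite Hr size_del.
by rewrite lt0n; apply/eqP.
Qed.

Lemma mem_remn n (g : seq 'I_n) x : (x \in remn g) = (x \notin g).
Proof. by rewrite /remn mem_filter mem_enum andbT. Qed.

Lemma size_remn n (g : seq 'I_n) : uniq g -> size g + size (remn g) = n.
Proof. by move=> Ug; rewrite -size_cat (perm_size (perm_g_rem Ug)) size_enum_ord. Qed.

Lemma prof_sound n (S : gks_S n) f : forall g w j x0, uniq g -> size (remn g) = f ->
  size w = f -> j < f -> nth false (prof S f g w) j ->
  exists pi p rr, [/\ pi = g ++ rr, pi = rcons p (nth x0 (remn g) j),
    perm_eq pi (enum 'I_n) &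
    forall k, k < f -> A_final n S pi (nth false w j) (nth x0 (remn g) k) = nth false w k].
Proof.
elim: f => // f IH g w j x0 Ug.
case E: (remn g) => [|u0 r'] //; rewrite (profE _ _ _ E) => -[Hs] Hw Hj.
have Ur : uniq (remn g) by rewrite filter_uniq ?enum_uniq.
have Hsz := size_remn Ug; rewrite E /= Hs in Hsz.
case: eqP => H0.
  move=> _; case: r' E Hs Hsz H0 Hw => // E /= Hs Hsz _ Hw; subst f.
  move: Hj; case: j => [_|//].
  have Hu0 : u0 \notin g by rewrite -mem_remn E inE.
  exists (rcons g u0), g, [:: u0]; split => //=.
  - by rewrite cats1.
  - by rewrite -cats1 -E; apply: perm_g_rem.
  move=> k; rewrite ltnS leqn0 => /eqP -> /=.
  by rewrite ffunE -cats1 index_cat (negbTE Hu0) /= eqxx addn0 size_cat addn1 eqxx.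
subst f; rewrite /profstep; case/nth_foldl.
  by rewrite nth_nseq; case: ifP.
case/hasP=> t /mapP[i]; rewrite mem_iota add0n => /andP[_ Hi] -> {t}.
rewrite /Fst; case: ifP => Hg; last by rewrite nth_nseq; case: ifP.
have Hi' : i < size (remn g) by rewrite E.
have Hr := remn_rcons u0 Ug Hi'; rewrite E in Hr.
set u := nth u0 (u0 :: r') i in Hg Hr *.
have Hu : u \notin g.
  by rewrite -mem_remn E mem_nth.
have Ug' : uniq (rcons g u) by rewrite rcons_uniq Hu Ug.
have Hsr : size (remn (rcons g u)) = size r' by rewrite Hr size_del.
have Hpos : 0 < size r' by rewrite lt0n; apply/eqP.
have Hszc := size_prof S (del i w) Ug' Hsr Hpos.
move=> Hc.
have Hji : j != i.
  by apply/eqP => Eji; rewrite Eji nth_ins ?Hszc // ltnn eqxx in Hc.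
rewrite nth_ins' ?Hszc // in Hc.
have Hw' : size (del i w) = size r' by rewrite size_del Hw.
have Hj' := jj_lt Hi Hj Hji.
have [pi [p [rr [Hpi1 Hpi2 Hperm Hagr]]]] := IH _ _ _ x0 Ug' Hsr Hw' Hj' Hc.
rewrite Hr nth_del (jj Hji) in Hpi2.
rewrite nth_del (jj Hji) in Hagr.
exists pi, p, (u :: rr); split => //.
  by rewrite Hpi1 cat_rcons.
move=> k Hk.
have Hszpi : size pi = size g + (size r').+1.
  by rewrite (perm_size Hperm) size_enum_ord.
case: (eqVneq k i) => Hki.
  subst k.
  have -> : nth x0 (u0 :: r') i = u by rewrite /u; apply: set_nth_default.
  rewrite ffunE Hpi1 cat_rcons index_cat (negbTE Hu) /= eqxx addn0.
  have -> : ((size g).+1 == size (g ++ u :: rr)) = false.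
    by rewrite -cat_rcons -Hpi1 Hszpi; apply/eqP; lia.
  rewrite -cat_rcons take_cat size_rcons ltnn subnn take0 cats0.
  by move/eqP: Hg.
have Hk' := jj_lt Hi Hk Hki.
have := Hagr _ Hk'.
by rewrite Hr nth_del (jj Hki) nth_del (jj Hki).
Qed.


Lemma count_foldl_map (F : nat -> seq bool) l acc i : i \in l ->
  count id (F i) <= count id (foldl setU acc (map F l)).
Proof. by move=> H; apply: count_foldl; apply: map_f. Qed.

Lemma all2_map {A B C : Type} (r : B -> C -> bool) (f : A -> B) (g : A -> C) s :
  all2 r (map f s) (map g s) = all (fun x => r (f x) (g x)) s.
Proof. by elim: s => //= a s ->. Qed.

Lemma PE K m : P K m.+2 = undup (gen K (opts m.+2 (P K m.+1)) (tablist m.+2 (fun _ => emptyS m.+2))).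
Proof. by []. Qed.

Lemma dp_claim n (S : gks_S n) K m : forall g, uniq g -> size (remn g) = m.+1 ->
  tablist m.+1 (prof S m.+1 g) \in P K m.+1 \/
  exists w, size w = m.+1 /\ K < count id (prof S m.+1 g w).
Proof.
elim: m => [|m IH] g Ug.
  case E: (remn g) => [|u0 r'] //; case: r' E => // E _; left.
  by rewrite /tablist /= E.
case E: (remn g) => [|u0 r'] // [Hs].
have Hchild : forall i, i < m.+2 ->
   uniq (rcons g (nth u0 (u0 :: r') i)) /\ size (remn (rcons g (nth u0 (u0 :: r') i))) = m.+1.
  move=> i Hi; have Hi' : i < size (remn g) by rewrite E /= Hs.
  have Hr := remn_rcons u0 Ug Hi'; rewrite E in Hr; split.
    by rewrite rcons_uniq Ug andbT -mem_remn E mem_nth //= Hs.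
  by rewrite Hr size_del //= Hs.
have HP : forall w, prof S m.+2 g w = profstep S (prof S m.+1) g u0 r' w.
  by move=> w; rewrite (profE _ _ _ E) Hs.
set child := fun i => rcons g (nth u0 (u0 :: r') i).
case Hb: (has (fun i => badT K (tablist m.+1 (prof S m.+1 (child i)))) (iota 0 m.+2)).
  case/hasP: Hb => i; rewrite mem_iota add0n => /andP[_ Hi].
  case/hasP => s /mapP[w' Hw' ->{s}] Hbad.
  rewrite mem_pats in Hw'; move/eqP: Hw' => Hw'.
  right; exists (ins i (S (child i)) w'); split; first by rewrite size_ins Hw'.
  rewrite HP /profstep.
  apply: leq_trans _ (count_foldl_map _ _ (_ : i \in iota 0 (size r').+1)); last first.
    by rewrite mem_iota add0n Hs.
  rewrite /Fst nth_ins ?Hw' // ltnn eqxx -/(child i) eqxx del_ins ?Hw' //.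
  by rewrite count_ins.
have Hin : forall i, i < m.+2 -> tablist m.+1 (prof S m.+1 (child i)) \in P K m.+1.
  move=> i Hi; have [Uc Sc] := Hchild i Hi.
  case: (IH _ Uc Sc) => // -[w [Hw Hbad]].
  move/hasPn: Hb => /(_ i); rewrite mem_iota add0n Hi => /(_ isT) /negP; case.
  apply/hasP; exists (prof S m.+1 (child i) w) => //.
  by apply: map_f; rewrite mem_pats Hw.
have Htab : tablist m.+2 (prof S m.+2 g) =
   foldl zipT (tablist m.+2 (fun _ => emptyS m.+2))
     [seq liftT m.+2 i (S (child i)) (tablist m.+1 (prof S m.+1 (child i))) | i <- iota 0 m.+2].
  rewrite /tablist (eq_map HP) /profstep Hs foldl_tab; congr foldl.
  apply/eq_in_map => i; rewrite mem_iota add0n => /andP[_ Hi].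
  rewrite /liftT; apply/eq_in_map => w; rewrite mem_pats => /eqP Hw.
  rewrite /Fst Hs /= -/(child i); case: ifP => // _.
  by rewrite lookup_tab // size_del Hw.
case Hbf: (badT K (tablist m.+2 (prof S m.+2 g))).
  right; case/hasP: Hbf => s /mapP[w Hw ->{s}] Hbad.
  by exists w; split => //; apply/eqP; rewrite -mem_pats.
left; rewrite PE mem_undup Htab; apply: gen_complete; last by rewrite -Htab Hbf.
rewrite /opts all2_map; apply/allP => i; rewrite mem_iota add0n => /andP[_ Hi].
apply: allpairs_f; last exact: Hin.
by case: (S (child i)); rewrite !inE.
Qed.


Lemma remn_nil n : remn ([::] : seq 'I_n) = enum 'I_n.
Proof. by apply/all_filterP/allP => x. Qed.

Lemma lower_from_dp n K (S : gks_S n) T k :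
  is_strategy k n S T -> P K n = [::] -> 0 < n -> K < k.
Proof.
case: n S T => // m S T [Hcor Hcard] HP _.
have Hs : size (remn ([::] : seq 'I_m.+1)) = m.+1 by rewrite remn_nil size_enum_ord.
case: (dp_claim S K (g := [::]) isT Hs); first by rewrite HP.
case=> w [Hw Hbad].
set s := prof S m.+1 [::] w in Hbad.
set sig := [ffun y : 'I_m.+1 => nth false w y].
have Hsub : forall x : 'I_m.+1, nth false s x -> x \in T sig.
  move=> x Hx.
  have [pi [p [rr [_ Hpi Hperm Hagr]]]] :=
    @prof_sound _ S _ [::] w x x isT Hs Hw (ltn_ord x) Hx.
  rewrite remn_nil nth_ord_enum in Hpi.
  have -> : sig = A_final m.+1 S pi (nth false w x).
    apply/ffunP => y; rewrite ffunE.
    by have := Hagr y (ltn_ord y); rewrite remn_nil nth_ord_enum => ->.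
  exact: Hcor Hpi.
have Hsz : size s = m.+1 by apply: size_prof.
set X := [seq x : 'I_m.+1 <- enum 'I_m.+1 | nth false s x].
have HX : size X = count id s.
  rewrite size_filter; symmetry; rewrite -{1}(mkseq_nth false s) Hsz /mkseq count_map.
  by rewrite -val_enum_ord count_map.
apply: (leq_trans _ (Hcard sig)); apply: leq_trans Hbad _; rewrite -HX.
have UX : uniq X by rewrite filter_uniq ?enum_uniq.
rewrite -(card_uniqP UX); apply: subset_leq_card; apply/subsetP => x.
by rewrite mem_filter => /andP[/Hsub].
Qed.

Lemma P5 : P 2 5 = [::].
Proof. vm_compute. reflexivity. Qed.

Lemma P2 : P 1 2 = [::].
Proof. vm_compute. reflexivity. Qed.


Lemma mono n k : strategy_exists k n.+1 -> strategy_exists k n.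
Proof.
case=> S [T [Hcor Hcard]].
pose wid := @widen_ord n n.+1 (leqnSn n).
have wid_inj : injective wid by move=> a b E; apply: val_inj; exact: (congr1 val E).
pose S' := (fun h : seq 'I_n => S (ord_max :: map wid h)) : gks_S n.
pose ext (sg : {ffun 'I_n -> bool}) : {ffun 'I_n.+1 -> bool} :=
  [ffun j : 'I_n.+1 => if (insub (val j) : option 'I_n) is Some i then sg i else S [:: ord_max]].
exists S', (fun sg => [set i | wid i \in T (ext sg)]); split; last first.
  move=> sg; apply: leq_trans (Hcard (ext sg)).
  rewrite -(card_in_imset (f := wid)); last by move=> a b _ _; apply: wid_inj.
  apply: subset_leq_card; apply/subsetP => j /imsetP[i]; rewrite inE => Hi ->.
  exact: Hi.
move=> pi b Hperm p x Hpi.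
have Upi : uniq pi by rewrite (perm_uniq Hperm) enum_uniq.
have Hsz : size pi = n by rewrite (perm_size Hperm) size_enum_ord.
set pi' := ord_max :: map wid pi.
have Hmax : ord_max \notin map wid pi.
  by apply/mapP => -[i _ /(congr1 val)] /= E; move: (ltn_ord i); rewrite -E ltnn.
have Hperm' : perm_eq pi' (enum 'I_n.+1).
  apply: uniq_perm; rewrite ?enum_uniq //.
    by rewrite /pi' cons_uniq Hmax (map_inj_uniq wid_inj).
  move=> j; rewrite mem_enum /pi' inE.
  case: (ltnP j n) => Hj.
    have -> : j = wid (Ordinal Hj) by apply: val_inj.
    by rewrite map_f ?orbT // (perm_mem Hperm) mem_enum.
  have -> : j = ord_max by apply: val_inj => /=; move: (ltn_ord j); lia.
  by rewrite eqxx.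
have Hpi' : pi' = rcons (ord_max :: map wid p) (wid x) by rewrite /pi' Hpi map_rcons.
have := Hcor _ b Hperm' _ _ Hpi'.
have -> : A_final n.+1 S pi' b = ext (A_final n S' pi b).
  apply/ffunP => j; rewrite !ffunE.
  case: (ltnP j n) => Hj.
    have Ej : j = wid (Ordinal Hj) by apply: val_inj.
    set i := Ordinal Hj in Ej.
    have -> : (insub (val j) : option 'I_n) = Some i by rewrite Ej /= (valK i).
    rewrite ffunE Ej /pi' /= (negbTE (_ : ord_max != wid i)); last first.
      by apply/eqP => /(congr1 val) /=; move: (ltn_ord i); lia.
    rewrite (index_map wid_inj) size_map eqSS; case: ifP => // _.
    by rewrite /S' map_take.
  have Ej : j = ord_max by apply: val_inj => /=; move: (ltn_ord j); lia.
  rewrite insubF; last by apply/negbTE; rewrite -leqNgt.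
  rewrite Ej /pi' /= eqxx /= size_map Hsz.
  have : 0 < n by rewrite -Hsz Hpi size_rcons.
  by move=> Hn; rewrite eqSS (negbTE (_ : 0 != n)) ?take0 // eq_sym -lt0n.
by rewrite inE.
Qed.

Lemma mono_le k m n : m <= n -> strategy_exists k n -> strategy_exists k m.
Proof.
move=> H; rewrite -(subnK H); elim: (n - m) => // d IH /mono; exact: IH.
Qed.


Lemma upper m n : 0 < m -> n <= m * m -> strategy_exists m n.
Proof.
move=> Hm Hn.
pose blk (y : 'I_n) := val y %/ m.
pose S : gks_S n := fun h =>
  if h is a :: h' then [forall z : 'I_n, (blk z == blk (last a h')) ==> (z \in h)] else false.
have S_rcons : forall s y, S (rcons s y) = [forall z, (blk z == blk y) ==> (z \in rcons s y)].
  by move=> s y; case: s => [|a s] //=; rewrite last_rcons.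
pose Q (sg : {ffun 'I_n -> bool}) y := [forall z, (blk z == blk y) ==> ~~ sg z].
pose T : gks_T n := fun sg =>
  if [pick y | Q sg y] is Some y0 then [set z | blk z == blk y0]
  else [set y | sg y && [forall z, ((blk z == blk y) && (z != y)) ==> ~~ sg z]].
exists S, T; split; last first.
  move=> sg; rewrite /T; case: pickP => [y0 _|_].
    pose f (z : 'I_n) : 'I_m := Ordinal (ltn_pmod z Hm).
    rewrite -(card_in_imset (f := f)); first by apply: leq_trans (max_card _) _; rewrite card_ord.
    move=> a b; rewrite !inE => /eqP Ha /eqP Hb /(congr1 val) /= Hab.
    apply: val_inj; rewrite /= (divn_eq a m) (divn_eq b m).
    by move: Ha Hb; rewrite /blk => -> ->; rewrite Hab.
  have Hb (z : 'I_n) : blk z < m by rewrite /blk ltn_divLR // (leq_trans (ltn_ord z) Hn).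
  pose f (z : 'I_n) : 'I_m := Ordinal (Hb z).
  rewrite -(card_in_imset (f := f)); first by apply: leq_trans (max_card _) _; rewrite card_ord.
  move=> a b; rewrite !inE => /andP[Ha /forallP Fa] /andP[Hb' _] /(congr1 val) /= Hab.
  apply/eqP; apply: contraT => Hne.
  by have := Fa b; rewrite Hab eqxx eq_sym Hne Hb'.
move=> pi b Hperm p x Hpi.
have Upi : uniq pi by rewrite (perm_uniq Hperm) enum_uniq.
have Hin : forall z, z \in pi by move=> z; rewrite (perm_mem Hperm) mem_enum.
have Hxp : x \notin p by move: Upi; rewrite Hpi rcons_uniq => /andP[].
have Hix : index x pi = size p by rewrite Hpi -cats1 index_cat (negbTE Hxp) /= eqxx addn0.
have Hsz : size pi = (size p).+1 by rewrite Hpi size_rcons.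
set sg := A_final n S pi b.
have Hsx : sg x = b by rewrite /sg ffunE Hix Hsz eqxx.
have Hiy : forall y, y != x -> index y pi < size p.
  move=> y Hy; have Hyp : y \in p by move: (Hin y); rewrite Hpi mem_rcons inE (negbTE Hy).
  by rewrite Hpi -cats1 index_cat Hyp index_mem.
have Hsy : forall y, y != x -> sg y = [forall z, (blk z == blk y) ==> (index z pi <= index y pi)].
  move=> y Hy; rewrite /sg ffunE.
  have Hl := Hiy y Hy.
  rewrite Hsz eqSS (negbTE (_ : index y pi != size p)); last by rewrite neq_ltn Hl.
  rewrite (take_nth y); last by rewrite Hsz ltnS ltnW.
  rewrite nth_index ?Hin // S_rcons.
  apply: eq_forallb => z; congr (_ ==> _).
  rewrite mem_rcons inE in_take ?Hin // [RHS]leq_eqVlt; congr (_ || _).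
  apply/eqP/eqP => [->//|E].
  by rewrite -(nth_index y (Hin z)) E nth_index ?Hin.
have Claim1 : forall y, y != x -> blk y = blk x -> sg y = false.
  move=> y Hy Hb; rewrite Hsy //; apply/forallP => /(_ x); rewrite Hb eqxx /= Hix.
  by rewrite leqNgt Hiy.
have Claim2 : forall y, blk y != blk x -> exists y', blk y' = blk y /\ sg y'.
  move=> y Hy.
  case: (@arg_maxnP _ y (fun z => blk z == blk y) (fun z => index z pi) (eqxx _)) => y' /eqP Hy' Hmax.
  exists y'; split => //.
  have Hy'x : y' != x by apply/eqP => E; rewrite -E Hy' eqxx in Hy.
  rewrite Hsy //; apply/forallP => z; apply/implyP => /eqP Hz.
  by apply: Hmax; rewrite Hz Hy'.
rewrite /T; case: pickP => [y0 Hy0|Hnone].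
  have Hb0 : blk y0 = blk x.
    apply/eqP; apply: contraT => Hne.
    have [y' [Hy'1 Hy'2]] := Claim2 _ Hne.
    by move/forallP: Hy0 => /(_ y'); rewrite Hy'1 eqxx Hy'2.
  have [Eb|Eb] := boolP b.
    by move/forallP: Hy0 => /(_ x); rewrite Hb0 eqxx Hsx Eb.
  by rewrite inE Hb0.
have Hb : b = true.
  apply: contraT => /negbTE Hbf.
  have := Hnone x; rewrite /Q => H; rewrite -H; apply/forallP => z.
  apply/implyP => /eqP Hz; case: (eqVneq z x) => [->|Hzx]; first by rewrite Hsx Hbf.
  by rewrite Claim1.
rewrite inE Hsx Hb /=; apply/forallP => z; apply/implyP => /andP[/eqP Hz Hzx].
by rewrite Claim1.
Qed.


Lemma lb1 k : strategy_exists k 1 -> 1 <= k.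
Proof.
case=> S [T [Hcor Hcard]].
have Hp : perm_eq [:: ord0] (enum 'I_1).
  apply: uniq_perm; rewrite ?enum_uniq // => z; by rewrite mem_enum (ord1 z) inE eqxx.
have := Hcor _ false Hp [::] ord0 erefl => H.
apply: leq_trans (Hcard (A_final 1 S [:: ord0] false)).
by apply/card_gt0P; exists ord0.
Qed.

Lemma lb2 n k : 2 <= n -> strategy_exists k n -> 2 <= k.
Proof.
move=> Hn /(mono_le Hn) [S [T H]]; exact: lower_from_dp H P2 isT.
Qed.

Lemma lb3 n k : 5 <= n -> strategy_exists k n -> 3 <= k.
Proof.
move=> Hn /(mono_le Hn) [S [T H]]; exact: lower_from_dp H P5 isT.
Qed.

Theorem mainTheorem10 :
  [/\ is_k_of 1 1, is_k_of 2 2, is_k_of 3 2, is_k_of 4 2 &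
   [/\ is_k_of 5 3, is_k_of 6 3, is_k_of 7 3, is_k_of 8 3 & is_k_of 9 3]].
Proof.
have G : forall n k, 0 < k -> n <= k * k ->
  (forall k', strategy_exists k' n -> k <= k') -> is_k_of n k.
  by move=> n k H1 H2 H3; split => //; apply: upper.
split; first (apply: G => // k'; exact: lb1).
- apply: G => // k'; exact: lb2.
- apply: G => // k'; exact: lb2.
- apply: G => // k'; exact: lb2.
split; apply: G => // k'; exact: lb3.
Qed.
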